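(* Let $m \ge 2$ and $G=\mathbb{Z}^{m-1} \rtimes \mathbb{Z}/ 2\mathbb{Z}$, where $\mathbb{Z}/2\mathbb{Z}$ acts on $\mathbb{Z}^{m-1}$ by $v\mapsto -v$. In $\mathcal{M}_m$ there are exactly $2^m-1$ marked groups whose underlying group is isomorphic to $G$.
   Context: A marked group on $m$ generators is a pair $(H,S)$ with $S=(g_1,\dots,g_m)$ an ordered generating tuple of $H$; two marked groups $(H,S)$, $(H',S')$ are identified if there is an isomorphism $H\to H'$ mapping $g_i$ to $g_i'$ for all $i$. $\mathcal{M}_m$ denotes the set (space) of these equivalence classes. *)

(* Defs.v *)
From mathcomp Require Import all_boot all_order all_algebra.
Set Implicit Arguments. Unset Strict Implicit. Unset Printing Implicit Defensive.
Import GRing.Theory.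
Local Open Scope ring_scope.

Record group := Group {
  carrier :> Type;
  gmul : carrier -> carrier -> carrier;
  gone : carrier;
  ginv : carrier -> carrier;
  gmulA : associative gmul;
  gmul1 : left_id gone gmul;
  gmulV : left_inverse gone ginv gmul }.

Inductive generated (H : group) (P : H -> Prop) : H -> Prop :=
| gen_in x : P x -> generated P x
| gen_one : generated P (gone H)
| gen_mul x y : generated P x -> generated P y -> generated P (gmul x y)
| gen_inv x : generated P x -> generated P (ginv x).

Definition is_hom (H K : group) (f : H -> K) : Prop :=
  forall x y, f (gmul x y) = gmul (f x) (f y).

Definition isomorphic (H K : group) : Prop :=
  exists f : H -> K, is_hom f /\ bijective f.

Record marked_group (m : nat) := MarkedGroup {
  mgroup : group;
  mgens : 'I_m -> mgroup;
  mgens_generate : forall x : mgroup, generated (fun y => exists i, y = mgens i) x }.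

Definition marked_equiv (m : nat) (A B : marked_group m) : Prop :=
  exists f : mgroup A -> mgroup B,
    [/\ is_hom f, bijective f & forall i, f (mgens A i) = mgens B i].

(* Semidirect product V ⋊ Z/2Z, Z/2Z = bool acting on V by v |-> -v.
   (v,a)(w,b) = (v + a.w, a xor b). *)
Section SemiInv.
Variable V : zmodType.
Definition twist (a : bool) (w : V) : V := if a then - w else w.
Definition si_mul (x y : V * bool) : V * bool :=
  (x.1 + twist x.2 y.1, x.2 (+) y.2).
Definition si_one : V * bool := (0, false).
Definition si_inv (x : V * bool) : V * bool := (- twist x.2 x.1, x.2).

Lemma si_mulA : associative si_mul.
Proof.
case=> u [] [v [] [w []]]; rewrite /si_mul /twist /= ?opprD ?opprK ?addrA //.
Qed.
Lemma si_mul1 : left_id si_one si_mul.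
Proof. by case=> v a; rewrite /si_mul /= add0r. Qed.
Lemma si_mulV : left_inverse si_one si_inv si_mul.
Proof. by case=> v [] ; rewrite /si_mul /si_inv /si_one /twist /= ?opprK ?subrr ?addNr. Qed.

Definition semidirect_inv : group := Group si_mulA si_mul1 si_mulV.
End SemiInv.

Definition G_m (m : nat) : group := semidirect_inv 'rV[int]_(m - 1).

(* Main.v *)
Require Import Defs.
From mathcomp Require Import all_boot all_order all_algebra.
From mathcomp Require Import zify.
Set Implicit Arguments. Unset Strict Implicit. Unset Printing Implicit Defensive.
Import GRing.Theory.

Section AbsGroup.
Variable H : group.
Lemma gK (a x : H) : gmul (ginv a) (gmul a x) = x.
Proof. by rewrite gmulA gmulV gmul1. Qed.
Lemma gmulVr (a : H) : gmul a (ginv a) = gone H.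
Proof.
have e : gmul (ginv a) (gmul a (ginv a)) = ginv a by rewrite gmulA gmulV gmul1.
transitivity (gmul (ginv (ginv a)) (gmul (ginv a) (gmul a (ginv a)))); first by rewrite gK.
by rewrite e gmulV.
Qed.
Lemma gmul1r (a : H) : gmul a (gone H) = a.
Proof. by rewrite -(gmulV a) gmulA gmulVr gmul1. Qed.
End AbsGroup.

Lemma hom1 (H K : group) (f : H -> K) : is_hom f -> f (gone H) = gone K.
Proof.
move=> hf. have e : gmul (f (gone H)) (f (gone H)) = f (gone H) by rewrite -hf gmul1.
by rewrite -(gmulV (f (gone H))) -{3}e gK.
Qed.

Lemma homV (H K : group) (f : H -> K) x : is_hom f -> f (ginv x) = ginv (f x).
Proof.
move=> hf. have e : gmul (f (ginv x)) (f x) = gone K by rewrite -hf gmulV hom1.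
by rewrite -[f (ginv x)]gmul1r -(gmulVr (f x)) gmulA e gmul1.
Qed.

Lemma gen_hom (H K : group) (f : H -> K) (P : H -> Prop) (Q : K -> Prop) :
  is_hom f -> (forall x, P x -> Q (f x)) ->
  forall x, generated P x -> generated Q (f x).
Proof.
move=> hf PQ x; elim=> {x} [x Px|| x y _ IHx _ IHy| x _ IHx].
- by apply: gen_in; apply: PQ.
- rewrite hom1 //; exact: gen_one.
- rewrite hf; exact: gen_mul.
- rewrite homV //; exact: gen_inv.
Qed.

Lemma inv_hom (H K : group) (f : H -> K) g :
  is_hom f -> cancel f g -> cancel g f -> is_hom g.
Proof. by move=> hf fK gK x y; apply: (can_inj fK); rewrite hf !gK. Qed.

Lemma comp_hom (H K L : group) (f : H -> K) (g : K -> L) :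
  is_hom f -> is_hom g -> is_hom (g \o f).
Proof. by move=> hf hg x y /=; rewrite hf hg. Qed.
Import Num.Theory.
Local Open Scope ring_scope.
Section Conc.
Variable n : nat.
Notation V := 'rV[int]_n.
Notation GG := (semidirect_inv V).

Lemma mulE (x y : GG) : gmul x y = (x.1 + twist x.2 y.1, x.2 (+) y.2).
Proof. by []. Qed.
Lemma oneE : gone GG = (0, false). Proof. by []. Qed.
Lemma invE (x : GG) : ginv x = (- twist x.2 x.1, x.2). Proof. by []. Qed.

Lemma invol (x : GG) : x.2 <-> (gmul x x = gone GG /\ x <> gone GG).
Proof.
case: x => v []; rewrite /= /si_mul /si_one /twist /=; split.
- by move=> _; split; [rewrite subrr | case].
- by [].
- by [].
- case=> [[e]] ne; exfalso; apply: ne; congr pair; apply/matrixP=> i j.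
  move/matrixP: e => /(_ i j); rewrite !mxE -mulr2n => /eqP; by rewrite mulrn_eq0 /= => /eqP.
Qed.

Lemma invol_hom (f : GG -> GG) x : is_hom f -> injective f -> (f x).2 = x.2.
Proof.
move=> hf fi; apply/idP/idP.
- move/invol=> [e ne]; apply/invol; split.
  + by apply: fi; rewrite hf e hom1.
  + by move=> ex; apply: ne; rewrite ex hom1.
- move/invol=> [e ne]; apply/invol; split.
  + by rewrite -hf e hom1.
  + by move=> ex; apply: ne; apply: fi; rewrite ex hom1.
Qed.

Definition i0 (S : {set 'I_n.+1}) : 'I_n.+1 := odflt ord0 [pick i in S].

Lemma i0_in S : S != set0 -> i0 S \in S.
Proof.
move=> /set0Pn [i iS]; rewrite /i0; case: pickP => [j //| H].
by move: (H i); rewrite /= iS.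
Qed.

Definition repg (S : {set 'I_n.+1}) (i : 'I_n.+1) : GG :=
  match unlift (i0 S) i with Some k => ('e_k, i \in S) | None => (0, true) end.

Lemma repg2 S i : S != set0 -> (repg S i).2 = (i \in S).
Proof.
move=> hS; rewrite /repg; case: (unliftP (i0 S) i) => [k|->] //=.
by rewrite i0_in.
Qed.

Lemma zmult (T : V -> Prop) : T 0 -> (forall x y, T x -> T y -> T (x + y)) ->
  (forall x, T x -> T (- x)) -> forall x c, T x -> T (c *: x).
Proof.
move=> T0 TD TN x c Tx.
have Tn k : T (x *+ k) by elim: k => [|k IH]; rewrite ?mulr0n ?mulrS //; apply: TD.
case: c => k; first by rewrite -natz scaler_nat.
by rewrite NegzE scaleNr -natz scaler_nat; apply: TN.
Qed.

Lemma repg_gen S : forall x : GG, generated (fun y => exists i, y = repg S i) x.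
Proof.
set P := fun y => _.
have Hi0 : repg S (i0 S) = (0, true) by rewrite /repg unlift_none.
have He k : generated P ('e_k, false).
  set i := lift (i0 S) k.
  have hi : repg S i = ('e_k, i \in S) by rewrite /repg liftK.
  case: (boolP (i \in S)) => iS.
  - have -> : ('e_k, false) = gmul (repg S i) (repg S (i0 S)).
      by rewrite hi Hi0 iS mulE /= /twist oppr0 addr0.
    by apply: gen_mul; apply: gen_in; [exists i | exists (i0 S)].
  - by apply: gen_in; exists i; rewrite hi (negbTE iS).
pose T x := generated P (x, false).
have T0 : T 0 by exact: gen_one.
have TD x y : T x -> T y -> T (x + y).
  by move=> Tx Ty; have := gen_mul Tx Ty.
have TN x : T x -> T (- x).
  by move=> Tx; have := gen_inv Tx.
have Tall x : T x.
  rewrite (row_sum_delta x); apply: (big_ind T) => // k _.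
  by apply: zmult => //; apply: He.
case=> x []; last exact: Tall.
have -> : ((x, true) : GG) = gmul ((x, false) : GG) (repg S (i0 S)) by rewrite Hi0 mulE /= /twist addr0.
by apply: gen_mul; [exact: Tall | apply: gen_in; exists (i0 S)].
Qed.

Definition sel (a : bool) (w : V) : V := if a then w else 0.

Lemma classify (g : 'I_n.+1 -> GG) :
  (forall y : GG, generated (fun z => exists i, z = g i) y) ->
  [set i | (g i).2] != set0 /\
  exists phi : GG -> GG, [/\ is_hom phi, bijective phi &
     forall i, phi (repg [set i | (g i).2] i) = g i].
Proof.
move=> gen; set S := [set i | (g i).2].
pose P := fun z : GG => exists i, z = g i.
have hS : S != set0.
  apply/negP => /eqP S0.
  have : forall y : GG, generated P y -> y.2 = false.
    move=> y; elim=> {y} [y [i ->]||x y _ hx _ hy|x _ hx] //.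
    - apply/negbTE; apply/negP => gi.
      have : i \in S by rewrite inE.
      by rewrite S0 inE.
    - by rewrite mulE /= hx hy.
  by move/(_ (0, true) (gen _)).
split=> //.
have iS := i0_in hS.
have g0 : (g (i0 S)).2 by move: iS; rewrite inE.
set w := (g (i0 S)).1.
pose r k := (g (lift (i0 S) k)).1 - sel (g (lift (i0 S) k)).2 w.
pose A : 'M[int]_n := \matrix_k r k.
pose phi (x : GG) : GG := (x.1 *m A + sel x.2 w, x.2).
have hphi : is_hom phi.
  case=> v a [x b]; rewrite /phi mulE /=; congr pair.
  case: a; case: b; rewrite /twist /sel /= ?mulmxDl ?mulNmx ?addr0 ?subr0.
  - by rewrite opprD addrACA subrr addr0.
  - by rewrite addrAC.
  - by rewrite addrA.
  - by [].
have PL : forall y : GG, generated P y -> exists c : 'rV_n, y.1 - sel y.2 w = c *m A.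
  move=> y; elim=> {y} [y [i ->]||[x a] [y b] _ [c hc] _ [d hd]|[x a] _ [c hc]].
  - case: (unliftP (i0 S) i) => [k ->|->].
      by exists 'e_k; rewrite -rowE rowK.
    by exists 0; rewrite g0 /sel subrr mul0mx.
  - by exists 0; rewrite /sel subrr mul0mx.
  - have ex : x = c *m A + sel a w by rewrite -hc subrK.
    have ey : y = d *m A + sel b w by rewrite -hd subrK.
    rewrite mulE /= ex ey; clear hc hd ex ey; case: a; case: b; rewrite /twist /sel /=.
    + by exists (c - d); rewrite subr0 mulmxBl opprD addrACA subrr addr0.
    + by exists (c - d); rewrite addr0 mulmxBl addrAC addrK.
    + by exists (c + d); rewrite addr0 addrA addrK mulmxDl.
    + by exists (c + d); rewrite !addr0 subr0 mulmxDl.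
  - have ex : x = c *m A + sel a w by rewrite -hc subrK.
    rewrite invE /= ex; clear hc ex; case: a; rewrite /twist /sel /=.
    + by exists c; rewrite opprK addrK.
    + by exists (- c); rewrite addr0 subr0 mulNmx.
have Be : forall k, exists c : 'rV_n, 'e_k = c *m A.
  move=> k; have [c hc] := PL _ (gen ('e_k, false)).
  by exists c; rewrite -hc /sel subr0.
have [f hf] := fin_all_exists Be.
pose B : 'M[int]_n := \matrix_k f k.
have BA : B *m A = 1%:M.
  by apply/row_matrixP => k; rewrite row_mul rowK row1 -hf.
have [_ Au] := mulmx1_unit BA.
exists phi; split=> //.
- exists (fun y : GG => (((y.1 - sel y.2 w) *m invmx A), y.2) : GG).
  + by case=> v a; rewrite /phi /= addrK mulmxK.
  + by case=> v a; rewrite /phi /= mulmxKV // subrK.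
- move=> i; rewrite /repg /phi; case: (unliftP (i0 S) i) => [k|] -> /=.
    rewrite -rowE rowK /r inE subrK.
    by case: (g _).
  rewrite mul0mx add0r /sel /w; move: g0; clear.
  by case: (g (i0 S)) => ? [].
Qed.
End Conc.

Definition rep n (S : {set 'I_n.+1}) : marked_group n.+1 :=
  @MarkedGroup n.+1 (semidirect_inv 'rV[int]_n) (repg S) (repg_gen S).

Lemma main (n m : nat) (E : m = n.+1) :
  exists reps : 'I_(2 ^ m - 1)%N -> marked_group m,
    [/\ (forall k, isomorphic (mgroup (reps k)) (semidirect_inv 'rV[int]_n)),
        (forall k l, marked_equiv (reps k) (reps l) -> k = l)
      & (forall M : marked_group m,
           isomorphic (mgroup M) (semidirect_inv 'rV[int]_n) ->
           exists k, marked_equiv M (reps k))].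
Proof.
subst m.
set A := predC1 (set0 : {set 'I_n.+1}).
have cA : (2 ^ n.+1 - 1)%N = #|A|.
  by rewrite cardC1 -cardsT -powersetT card_powerset cardsT card_ord subn1.
have nz (j : 'I_#|A|) : enum_val j != set0 by have := enum_valP j; rewrite inE.
exists (fun k => rep (enum_val (cast_ord cA k))); split.
- move=> k; exists id; split; first by [].
  by exists id.
- move=> k l [f [hf bf ef]].
  apply: (cast_ord_inj (eq_n := cA)); apply: enum_val_inj.
  apply/setP => i.
  rewrite -(repg2 i (nz _)) -(repg2 i (nz (cast_ord cA l))).
  rewrite -(invol_hom (repg _ i) hf (bij_inj bf)).
  by move: (ef i) => /= ->.
- move=> M [h [hh bh]].
  pose g i := h (mgens M i).
  have gen : forall y, generated (fun z => exists i, z = g i) y.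
    move=> y; case: bh => h' hK h'K.
    rewrite -(h'K y); apply: (gen_hom hh _ (mgens_generate _)).
    by move=> x [i ->]; exists i.
  have [hS [phi [hphi bphi ephi]]] := classify gen.
  set S := [set i | (g i).2] in hS ephi.
  have SA : S \in A by rewrite inE.
  exists (cast_ord (esym cA) (enum_rank_in SA S)).
  rewrite cast_ordKV enum_rankK_in //.
  case: bphi => psi phiK psiK.
  exists (psi \o h); split.
  + exact: comp_hom hh (inv_hom hphi phiK psiK).
  + apply: bij_comp => //; by exists phi.
  + by move=> i /=; rewrite -/(g i) -ephi phiK.
Qed.

Local Close Scope ring_scope.

Theorem proposition5p4 (m : nat) (hm : 2 <= m) :
  exists reps : 'I_(2 ^ m - 1) -> marked_group m,
    [/\ (forall k, isomorphic (mgroup (reps k)) (G_m m)),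
        (forall k l, marked_equiv (reps k) (reps l) -> k = l)
      & (forall M : marked_group m, isomorphic (mgroup M) (G_m m) ->
           exists k, marked_equiv M (reps k))].
Proof.
have E : m = (m - 1).+1 by rewrite subn1 prednK // ltnW.
exact: (main E).
Qed.
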